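(* Fix one of the types A, B, D below with its group $G$ of orthogonal transformations of $\mathbb{R}^n$ and its domain $C\subset\mathbb{R}^n$. Let $(\xi_1,\dots,\xi_n)$ be a tuple of random vectors in $\mathbb{R}^d$ satisfying all assumptions of that type except possibly the general position assumption, with associated convex hull $H_{n,d}$, and let $A$ be the random $d\times n$ matrix with columns $\xi_1,\dots,\xi_n$, viewed as a linear map $\mathbb{R}^n\to\mathbb{R}^d$. Then for every $g\in G$, $$\mathbb{P}[0\in H_{n,d}]=\mathbb{P}[\ker A\cap(g\bar C)\neq\{0\}].$$
   Context: $e_1,\dots,e_n$ is the standard basis of $\mathbb{R}^n$ and $\bar C$ the closure of $C$. For a tuple $(\xi_1,\dots,\xi_n)$ of random vectors in $\mathbb{R}^d$, put $S_k=\xi_1+\dots+\xi_k$ and $S_n^*=S_{n-1}-\xi_n$. Type A: $n\ge d+1$; the tuple is exchangeable ($(\xi_1,\dots,\xi_n)\stackrel{d}{=}(\xi_{\sigma(1)},\dots,\xi_{\sigma(n)})$ for all permutations $\sigma$); $S_n=0$ a.s.; general position assumption: any $d$ vectors among $S_1,\dots,S_{n-1}$ are linearly independent a.s.; $H_{n,d}=\mathrm{Conv}(S_1,\dots,S_{n-1})$; $G$ consists of the maps $g_\sigma(e_k)=e_{\sigma(k)}$, $\sigma$ a permutation of $\{1,\dots,n\}$; $C=\{x\in\mathbb{R}^n:x_1<\dots<x_n,\ x_1+\dots+x_n=0\}$. Type B: $n\ge d$; $(\xi_1,\dots,\xi_n)\stackrel{d}{=}(\varepsilon_1\xi_{\sigma(1)},\dots,\varepsilon_n\xi_{\sigma(n)})$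 for all permutations $\sigma$ and all signs $\varepsilon_i\in\{-1,1\}$; general position assumption: any $d$ vectors among $S_1,\dots,S_n$ are linearly independent a.s.; $H_{n,d}=\mathrm{Conv}(S_1,\dots,S_n)$; $G$ consists of the maps $g_{\sigma,\varepsilon}(e_k)=\varepsilon_ke_{\sigma(k)}$ with $\sigma$ a permutation and $\varepsilon\in\{-1,1\}^n$; $C=\{x:0<x_1<\dots<x_n\}$. Type D: $n\ge\max\{2,d\}$; the same invariance as type B but only for signs with $\varepsilon_1\cdots\varepsilon_n=1$; general position assumption: any $d$ vectors from either collection $S_1,\dots,S_n$ or $S_1,\dots,S_{n-1},S_n^*$ are linearly independent a.s.; $H_{n,d}=\mathrm{Conv}(S_1,\dots,S_n,S_n^* )$; $G$ consists of the maps $g_{\sigma,\varepsilon}$ with $\varepsilon_1\cdots\varepsilon_n=1$; $C=\{x:0<|x_1|<x_2<\dots<x_n\}$. *)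

(* Defs.v *)
From HB Require Import structures.
From mathcomp Require Import all_boot all_order all_algebra all_fingroup.
From mathcomp Require Import all_classical all_reals all_analysis.
Set Implicit Arguments. Unset Strict Implicit. Unset Printing Implicit Defensive.
Import Order.TTheory GRing.Theory Num.Theory.
Import numFieldNormedType.Exports.
Local Open Scope classical_set_scope.
Local Open Scope ring_scope.

Inductive rtype := TypeA | TypeB | TypeD.

Section Defs.
Variable R : realType.

(* The product (= Borel) sigma-algebra on 'M[R]_(d,n), generated by the
   coordinate maps M |-> M i j. *)
Definition mx_gen (d n : nat) : set (set 'M[R]_(d, n)) :=
  [set B | exists (i : 'I_d) (j : 'I_n) (A : set R),
     measurable A /\ B = [set M : 'M[R]_(d, n) | A (M i j)]].

Definition mx_measurable (d n : nat) (B : set 'M[R]_(d, n)) : Prop :=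
  <<s @mx_gen d n >> B.

(* X : Omega -> 'M_(d,n) is a random matrix, i.e. the tuple of its columns
   is a tuple of random vectors in R^d. *)
Definition random_mx {dm} {Omega : measurableType dm} (d n : nat)
  (X : Omega -> 'M[R]_(d, n)) : Prop :=
  forall B, mx_measurable B -> measurable (X @^-1` B).

Definition eq_in_law {dm} {Omega : measurableType dm} (P : probability Omega R)
  (d n : nat) (X Y : Omega -> 'M[R]_(d, n)) : Prop :=
  forall B, mx_measurable B -> P (X @^-1` B) = P (Y @^-1` B).

(* the matrix with columns eps_k xi_{sigma(k)}, where xi_k = col k M *)
Definition perm_sign_cols (d n : nat) (s : 'S_n) (eps : 'I_n -> bool)
  (M : 'M[R]_(d, n)) : 'M[R]_(d, n) :=
  \matrix_(i < d, k < n) ((-1) ^+ eps k * M i (s k)).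

Definition signs_ok (t : rtype) (n : nat) (eps : 'I_n -> bool) : bool :=
  match t with
  | TypeA => [forall k, ~~ eps k]
  | TypeB => true
  | TypeD => ~~ odd (\sum_(k < n) (eps k : nat))  (* eps_1 ... eps_n = 1 *)
  end.

(* g_{sigma,eps} as a linear map on column vectors: g(e_k) = eps_k e_{sigma(k)},
   i.e. (g x)_{sigma(k)} = eps_k x_k. *)
Definition g_act (n : nat) (s : 'S_n) (eps : 'I_n -> bool)
  (x : 'cV[R]_n) : 'cV[R]_n :=
  \col_(j < n) ((-1) ^+ eps (s^-1 j)%g * x (s^-1 j)%g ord0).

Definition coneC (t : rtype) (n : nat) : set 'cV[R]_n :=
  match t with
  | TypeA => [set x | (forall i j : 'I_n, (i < j)%N -> x i ord0 < x j ord0)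
                      /\ \sum_(i < n) x i ord0 = 0]
  | TypeB => [set x | (forall i : 'I_n, (nat_of_ord i == 0)%N -> 0 < x i ord0)
                      /\ (forall i j : 'I_n, (i < j)%N -> x i ord0 < x j ord0)]
  | TypeD => [set x | (forall i : 'I_n, (nat_of_ord i == 0)%N -> 0 < `|x i ord0|)
                      /\ (forall i j : 'I_n, (i < j)%N ->
                            (if (nat_of_ord i == 0)%N then `|x i ord0| else x i ord0)
                              < x j ord0)]
  end.

(* S_k = xi_1 + ... + xi_k (k = 0..n), xi_i the i-th column of M *)
Definition psum (d n : nat) (M : 'M[R]_(d, n)) (k : nat) : 'cV[R]_d :=
  \sum_(i < n | (i < k)%N) col i M.

(* S_n^* = S_{n-1} - xi_n *)
Definition psum_star (d n : nat) (M : 'M[R]_(d, n)) : 'cV[R]_d :=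
  psum M n.-1 - \sum_(i < n | (nat_of_ord i == n.-1)%N) col i M.

Definition hull_points (t : rtype) (d n : nat) (M : 'M[R]_(d, n))
  : seq 'cV[R]_d :=
  match t with
  | TypeA => [seq psum M k | k <- iota 1 n.-1]
  | TypeB => [seq psum M k | k <- iota 1 n]
  | TypeD => rcons [seq psum M k | k <- iota 1 n] (psum_star M)
  end.

Definition in_conv_hull (d : nat) (s : seq 'cV[R]_d) (x : 'cV[R]_d) : Prop :=
  exists l : 'I_(size s) -> R,
    (forall i, 0 <= l i) /\ \sum_i l i = 1 /\
    \sum_i l i *: nth 0 s i = x.

Definition type_assumptions {dm} {Omega : measurableType dm}
  (P : probability Omega R) (t : rtype) (d n : nat)
  (X : Omega -> 'M[R]_(d, n)) : Prop :=
  match t with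
  | TypeA => (d.+1 <= n)%N
             /\ (forall s : 'S_n, eq_in_law P X (perm_sign_cols s (fun _ => false) \o X))
             /\ {ae P, forall w, psum (X w) n = 0}
  | TypeB => (d <= n)%N
             /\ (forall (s : 'S_n) (eps : 'I_n -> bool),
                   eq_in_law P X (perm_sign_cols s eps \o X))
  | TypeD => (maxn 2 d <= n)%N
             /\ (forall (s : 'S_n) (eps : 'I_n -> bool), signs_ok TypeD eps ->
                   eq_in_law P X (perm_sign_cols s eps \o X))
  end.

End Defs.

(* Main.v *)
Require Import Defs.
From HB Require Import structures.
From mathcomp Require Import all_boot all_order all_algebra all_fingroup.
From mathcomp Require Import all_classical all_reals all_analysis.
From mathcomp Require Import measurable_realfun.
From mathcomp Require Import ring lra zify.
Import Order.TTheory GRing.Theory Num.Theory.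
Import numFieldNormedType.Exports.
Local Open Scope classical_set_scope.
Local Open Scope ring_scope.
Set Implicit Arguments. Unset Strict Implicit. Unset Printing Implicit Defensive.


Section Base.
Variable R : realType.
Lemma closure_ge0 a b (C : set 'M[R]_(a,b)) (phi : 'M[R]_(a,b) -> R) K :
  0 <= K -> (forall x y, phi x - phi y <= K * `|x - y|) ->
  (forall y, C y -> 0 <= phi y) -> forall x, closure C x -> 0 <= phi x.
Proof.
move=> K0 lip hC x cx; rewrite leNgt; apply/negP => px.
have e0 : 0 < - phi x / (K + 1) by rewrite divr_gt0 // ?oppr_gt0 // ltr_wpDl.
have [y [Cy]] := cx _ (nbhsx_ballx x _ e0).
rewrite -ball_normE /= => hxy.
have := hC _ Cy; apply/negP; rewrite -ltNge.
have h1 := lip y x; rewrite distrC in h1.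
have h2 : K * `|x - y| <= K * (- phi x / (K + 1)) by rewrite ler_wpM2l // ltW.
have h3 : K * (- phi x / (K + 1)) < - phi x.
  rewrite mulrA ltr_pdivrMr ?ltr_wpDl // mulrDr mulr1 mulrC ltrDl.
  by rewrite oppr_gt0.
have : phi y <= phi x + K * `|x - y| by rewrite -lerBlDl.
move=> h4; apply: (le_lt_trans h4). 
rewrite -ltrBrDl sub0r. exact: (le_lt_trans h2 h3).
Qed.

Lemma lip_continuous a b c e (F : 'M[R]_(a,b) -> 'M[R]_(c,e)) K :
  0 <= K -> (forall x y, `|F x - F y| <= K * `|x - y|) -> continuous F.
Proof.
move=> K0 lip x; apply/(@cvgrPdist_lt _ _ _ _ (nbhs_filter x)) => eps eps0.
apply/nbhs_ballP; exists (eps / (K + 1)) => /=.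
  by rewrite divr_gt0 // ltr_wpDl.
move=> y; rewrite -ball_normE /= => hxy.
apply: (le_lt_trans (lip x y)).
have: K * `|x - y| <= K * (eps / (K + 1)) by rewrite ler_wpM2l // ltW.
move/le_lt_trans; apply.
by rewrite mulrA ltr_pdivrMr ?ltr_wpDl // mulrDr mulr1 mulrC ltrDl.
Qed.
Lemma mx_entry_le a b (M : 'M[R]_(a,b)) i j : `|M i j| <= `|M|.
Proof.
rewrite [`|M|]mx_normrE.
have := @le_bigmax _ _ _ 0 (fun ij : 'I_a * 'I_b => `|M ij.1 ij.2|) (i,j).
by apply.
Qed.
Lemma mx_norm_le a b (M : 'M[R]_(a,b)) c : 0 <= c -> (forall i j, `|M i j| <= c) -> `|M| <= c.
Proof.
move=> c0 h; rewrite [`|M|]mx_normrE; apply: bigmax_le => // ij _; exact: h.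
Qed.
Lemma mx_norm_lt a b (M : 'M[R]_(a,b)) c : 0 < c -> (forall i j, `|M i j| < c) -> `|M| < c.
Proof.
move=> c0 h; rewrite [`|M|]mx_normrE; apply: bigmax_lt => // ij _; exact: h.
Qed.

Definition zconv m d (p : 'I_m -> 'cV[R]_d) : Prop :=
  exists l : 'I_m -> R, (forall i, 0 <= l i) /\ \sum_i l i = 1 /\ \sum_i l i *: p i = 0.

Lemma le_sum_one m (l : 'I_m -> R) i : (forall i, 0 <= l i) -> l i <= \sum_j l j.
Proof.
by move=> h; rewrite (bigD1 i) //= lerDl sumr_ge0.
Qed.

Lemma zconv_approx m d (p : 'I_m -> 'cV[R]_d) : ~ zconv p ->
  exists2 e, 0 < e & forall l : 'I_m -> R, (forall i, 0 <= l i) -> \sum_i l i = 1 ->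
     e <= `|\sum_i l i *: p i|.
Proof.
move=> nc.
pose S := [set v : 'rV[R]_m | (forall i, 0 <= v ord0 i) /\ \sum_i v ord0 i = 1].
pose F := fun v : 'rV[R]_m => \sum_i v ord0 i *: p i.
have Sb : bounded_set S.
  exists 1; split; first by rewrite realE ler01.
  move=> M M1 v [h1 h2]; apply: mx_norm_le; first by rewrite (le_trans ler01) ?ltW.
  move=> i j; rewrite (ord1 i) ger0_norm // (le_trans _ (ltW M1)) // -h2.
  exact: le_sum_one.
have hsum : forall u w : 'rV[R]_m, `|\sum_i u ord0 i - \sum_i w ord0 i| <= m%:R * `|u - w|.
  move=> u w; rewrite -sumrB (le_trans (ler_norm_sum _ _ _)) //.
  rewrite mulr_natl -[m in _ *+ m]card_ord -sumr_const; apply: ler_sum => i _.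
  by have := mx_entry_le (u - w) ord0 i; rewrite !mxE.
have Scl : closed S.
  move=> x cx; split.
    move=> i; apply: (@closure_ge0 _ _ S (fun v => v ord0 i) 1) => //.
      move=> u w; rewrite mul1r; have := mx_entry_le (u - w) ord0 i.
      by rewrite !mxE => h; exact: le_trans (ler_norm _) h.
    by move=> y [].
  have k1 : 0 <= \sum_i x ord0 i - 1.
    apply: (@closure_ge0 _ _ S (fun v => \sum_i v ord0 i - 1) m%:R) => //.
      move=> u w; rewrite opprB addrA subrK; apply: le_trans (hsum u w).
      exact: ler_norm.
    by move=> y [_ ->]; rewrite subrr.
  have k2 : 0 <= 1 - \sum_i x ord0 i.
    apply: (@closure_ge0 _ _ S (fun v => 1 - \sum_i v ord0 i) m%:R) => //.
      move=> u w; rewrite opprB addrC addrA subrK distrC; apply: le_trans (hsum w u).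
      exact: ler_norm.
    by move=> y [_ ->]; rewrite subrr.
  by apply/eqP; rewrite eq_le -subr_ge0 k2 -subr_ge0 k1.
have Sc : compact S := bounded_closed_compact Sb Scl.
have Flip : forall u w, `|F u - F w| <= (\sum_i `|p i|) * `|u - w|.
  move=> u w; rewrite /F -sumrB.
  under eq_bigr do rewrite -scalerBl.
  rewrite (le_trans (ler_norm_sum _ _ _)) // mulr_suml; apply: ler_sum => i _.
  rewrite normrZ mulrC ler_wpM2l //.
  by have := mx_entry_le (u - w) ord0 i; rewrite !mxE.
have Fc : continuous F := lip_continuous (sumr_ge0 _ (fun i _ => normr_ge0 (p i))) Flip.
have FSc : compact (F @` S) := continuous_compact (continuous_subspaceT Fc) Sc.
have FScl : closed (F @` S) := compact_closed (@norm_hausdorff _ _) FSc.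
have ncl : ~ closure (F @` S) 0.
  move/FScl => [v [h1 h2] Fv]; apply: nc; exists (fun i => v ord0 i); done.
have [e e0 he] : exists2 e, 0 < e & forall v, S v -> ~ ball 0 e (F v).
  apply: contrapT => H; apply: ncl => B /nbhs_ballP [e e0 hb].
  apply: contrapT => H2; apply: H; exists e => // v Sv bv; apply: H2.
  by exists (F v); split; [exists v | exact: hb].
exists e => // l l0 l1; rewrite leNgt; apply/negP => hl.
apply: (he (\row_i l i)).
  by split; [move=> i; rewrite mxE | under eq_bigr do rewrite mxE].
rewrite -ball_normE /= sub0r normrN /F.
by under eq_bigr do rewrite mxE.
Qed.

Section Meas.
Variables d n : nat.
Local Notation T := (g_sigma_algebraType (@mx_gen R d n)).
Lemma meas_coord (r : 'I_d) (j : 'I_n) : measurable_fun [set: T] (fun M : T => (M : 'M[R]_(d,n)) r j).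
Proof.
move=> _ Y mY; rewrite setTI; apply: sub_sigma_algebra.
by exists r, j, Y.
Qed.

Lemma meas_lin (r : 'I_d) (w : 'I_n -> R) c :
  measurable [set M : T | `|\sum_j w j * (M : 'M[R]_(d,n)) r j| < c].
Proof.
have mf : measurable_fun [set: T] (fun M : T => \sum_j w j * (M : 'M[R]_(d,n)) r j).
  apply: measurable_sum => j; apply: measurable_funM; first exact: measurable_cst.
  exact: meas_coord.
have := mf measurableT [set x : R | `|x| < c].
rewrite setTI; apply.
rewrite (_ : [set x : R | `|x| < c] = `]-c, c[%classic); first exact: measurable_itv.
by apply/seteqP; split => x /=; rewrite in_itv /= ltr_norml.
Qed.
End Meas.
End Base.

Section C.
Variable R : realType.

Lemma meas_forall_ord {dd} {T : measurableType dd} k (P : 'I_k -> set T) :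
  (forall r, measurable (P r)) -> measurable [set x | forall r, P r x].
Proof.
move=> mP.
rewrite (_ : [set x | forall r, P r x] =
   \bigcap_j (if @insub _ (fun j => (j < k)%N) 'I_k j is Some r then P r else setT)).
  by apply: bigcapT_measurable => j; case: insub.
apply/seteqP; split => x /=.
  by move=> h j _; case: insub.
move=> h r; have := h (val r) I; by rewrite valK.
Qed.

Variables d n m : nat.
Variable vs : 'I_m -> 'cV[R]_n.
Local Notation T := (g_sigma_algebraType (@mx_gen R d n)).

Definition aof (k : nat) : 'I_m -> nat :=
  fun i => (odflt [ffun=> 0%N] (unpickle k) : {ffun 'I_m -> nat}) i.

Definition Aset (q k : nat) : set 'M[R]_(d,n) :=
  [set M | (0 < \sum_i aof k i)%N /\ forall r : 'I_d,
    `|\sum_i (aof k i)%:R * (M *m vs i) r ord0| < (\sum_i aof k i)%:R / q.+1%:R].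

Lemma Aset_meas q k : measurable (Aset q k : set T).
Proof.
have E : forall (M : 'M[R]_(d,n)) r, \sum_i (aof k i)%:R * (M *m vs i) r ord0 =
   \sum_j (\sum_i (aof k i)%:R * vs i j ord0) * M r j.
  move=> M r; under eq_bigr => i _ do rewrite mxE mulr_sumr.
  rewrite exchange_big /=; apply: eq_bigr => j _; rewrite mulr_suml.
  by apply: eq_bigr => i _; rewrite mulrA mulrAC.
rewrite /Aset; case: (ltnP 0 (\sum_i aof k i)) => h.
  rewrite (_ : [set M | _ /\ _] = [set M : T | forall r : 'I_d,
    `|\sum_j (\sum_i (aof k i)%:R * vs i j ord0) * (M : 'M[R]_(d,n)) r j| < (\sum_i aof k i)%:R / q.+1%:R]).
    by apply: meas_forall_ord => r; apply: meas_lin.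
  apply/seteqP; split => M /=.
    by move=> [_ H] r; rewrite -E.
  by move=> H; split => // r; rewrite E.
rewrite (_ : [set M | _ /\ _] = set0) //.
apply/seteqP; split => M /=; last by []. by move=> [].
Qed.

Lemma zconv_eq : [set M : 'M[R]_(d,n) | zconv (fun i => M *m vs i)] =
  \bigcap_q \bigcup_k Aset q k.
Proof.
apply/seteqP; split.
  move=> M [l [l0 [l1 lsum]]] q _.
  set p := fun i => M *m vs i.
  have row0 : forall r, \sum_i l i * p i r ord0 = 0.
    move=> r; transitivity ((\sum_i l i *: p i) r ord0).
      by rewrite summxE; apply: eq_bigr => i _; rewrite [in RHS]mxE.
    by rewrite lsum mxE.
  pose B := \sum_i `|p i|.
  have B0 : 0 <= B by apply: sumr_ge0 => i _.
  pose N := (Num.truncn (m%:R + q.+1%:R * (B + 1))).+1.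
  have NX : m%:R + q.+1%:R * (B+1) < N%:R := truncnS_gt _.
  pose a := fun i => Num.truncn (N%:R * l i).
  have ha : forall i, (a i)%:R <= N%:R * l i < (a i).+1%:R.
    by move=> i; apply: truncn_itv; rewrite mulr_ge0.
  have hs : N%:R - m%:R <= (\sum_i a i)%:R :> R.
    have e1 : N%:R = \sum_i N%:R * l i :> R by rewrite -mulr_sumr l1 mulr1.
    rewrite lerBlDr natr_sum [X in X <= _]e1.
    have em : m%:R = \sum_(i < m) (1:R) by rewrite sumr_const card_ord.
    rewrite em -big_split /=.
    by apply: ler_sum => i _; have /andP[_ /ltW] := ha i; rewrite -natr1.
  have hpos : q.+1%:R * (B+1) < (\sum_i a i)%:R :> R by lra.
  have aofE : aof (pickle [ffun i => a i]) = a.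
    by apply/funext => i; rewrite /aof pickleK /= ffunE.
  exists (pickle [ffun i => a i]) => //.
  rewrite /Aset aofE; split.
    rewrite -(ltr0n R); apply: le_lt_trans hpos.
    by rewrite mulr_ge0 // addr_ge0.
  move=> r.
  have eqs : \sum_i (a i)%:R * p i r ord0 = \sum_i ((a i)%:R - N%:R * l i) * p i r ord0.
    have : \sum_i ((a i)%:R - N%:R * l i) * p i r ord0 =
      \sum_i (a i)%:R * p i r ord0 - N%:R * \sum_i l i * p i r ord0.
      by rewrite mulr_sumr -sumrB; apply: eq_bigr => i _; ring.
    by rewrite row0 mulr0 subr0 => <-.
  rewrite eqs; apply: (le_lt_trans (ler_norm_sum _ _ _)).
  apply: (@le_lt_trans _ _ B).
    rewrite /B; apply: ler_sum => i _; rewrite normrM.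
    have h1 : `|(a i)%:R - N%:R * l i| <= 1.
      rewrite distrC ger0_norm; have /andP[h1 h2] := ha i; rewrite -natr1 in h2.
        lra.
      lra.
    have h2 : `|p i r ord0| <= `|p i| := mx_entry_le _ _ _.
    by rewrite -[`|p i|]mul1r; apply: ler_pM.
  rewrite ltr_pdivlMr ?ltr0n //.
  have : q.+1%:R * B <= q.+1%:R * (B+1) :> R by rewrite ler_wpM2l // lerDl.
  rewrite mulrC; lra.
move=> M H; apply: contrapT => nc; have [e e0 he] := zconv_approx nc.
pose q := Num.truncn (e^-1).
have hq : e^-1 < q.+1%:R := truncnS_gt _.
have [k _ [apos ak]] := H q I.
pose s := \sum_i aof k i.
pose l := fun i => (aof k i)%:R / s%:R : R.
have s0 : 0 < s%:R :> R by rewrite ltr0n.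
have l0 : forall i, 0 <= l i by move=> i; rewrite divr_ge0 // ltW.
have l1 : \sum_i l i = 1 by rewrite -mulr_suml -natr_sum divff // gt_eqF.
have := he l l0 l1; rewrite leNgt => /negP; apply; apply: mx_norm_lt => // r j.
rewrite (ord1 j) summxE.
under eq_bigr do rewrite mxE.
rewrite /l; under eq_bigr do rewrite mulrAC.
rewrite -mulr_suml normrM [`|s%:R^-1|]ger0_norm ?invr_ge0 ?ltW //.
have := ak r; rewrite -/s => h.
rewrite ltr_pdivrMr //.
apply: (lt_le_trans h).
rewrite ler_pdivrMr ?ltr0n //.
have eq1 : 1 < e * q.+1%:R by move: hq; rewrite -(ltr_pM2l e0) mulfV ?gt_eqF.
have : s%:R * 1 <= s%:R * (e * q.+1%:R) :> R by rewrite ler_pM2l // ltW.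
by rewrite mulr1 mulrA [s%:R * e]mulrC.
Qed.

Lemma zconv_meas : mx_measurable [set M : 'M[R]_(d,n) | zconv (fun i => M *m vs i)].
Proof.
rewrite zconv_eq.
change (measurable (\bigcap_q \bigcup_k Aset q k : set T)).
apply: bigcapT_measurable => q; apply: bigcupT_measurable => k; exact: Aset_meas.
Qed.

End C.

Section P1.
Variable R : realType.

Lemma g_actP d n (M : 'M[R]_(d,n)) (s : 'S_n) eps x :
  M *m g_act s eps x = perm_sign_cols s eps M *m x.
Proof.
apply/matrixP => r c; rewrite !mxE (ord1 c).
rewrite (reindex_inj (@perm_inj _ s)) /=; apply: eq_bigr => k _.
by rewrite !mxE permK mulrCA mulrA.
Qed.

Lemma g_act0 n (s : 'S_n) eps (x : 'cV[R]_n) : g_act s eps x = 0 -> x = 0.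
Proof.
move=> h; apply/matrixP => k c; rewrite (ord1 c) mxE.
have := congr1 (fun v : 'cV[R]_n => v (s k) ord0) h; rewrite !mxE permK.
by move/eqP; rewrite mulf_eq0 signr_eq0 /= => /eqP.
Qed.

Lemma g_act_zero n (s : 'S_n) eps : g_act s eps (0 : 'cV[R]_n) = 0.
Proof. by apply/matrixP => k c; rewrite !mxE mulr0. Qed.

Lemma Ecl_g d n (M : 'M[R]_(d,n)) (s : 'S_n) eps (S : set 'cV[R]_n) :
  (exists x, x != 0 /\ M *m x = 0 /\ (g_act s eps @` S) x) <->
  (exists y, y != 0 /\ perm_sign_cols s eps M *m y = 0 /\ S y).
Proof.
split.
  move=> [x [x0 [Mx [y Sy gy]]]]; exists y; split; last split => //.
    by apply: contraNneq x0 => y0; rewrite -gy y0 g_act_zero.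
  by rewrite -g_actP gy.
move=> [y [y0 [My Sy]]]; exists (g_act s eps y); split; last split.
- by apply: contra y0 => /eqP /g_act0 ->.
- by rewrite g_actP.
- by exists y.
Qed.

Lemma zconv_ext m d (p p' : 'I_m -> 'cV[R]_d) : (forall i, p i = p' i) -> zconv p <-> zconv p'.
Proof.
move=> h; split => -[l [l0 [l1 ls]]]; exists l; split => //; split => //;
  rewrite -[RHS]ls; apply: eq_bigr => i _; by rewrite h.
Qed.

Lemma in_conv_hull_zconv d k (s : seq 'cV[R]_d) (p : 'I_k -> 'cV[R]_d) (e : size s = k) :
  (forall i : 'I_k, nth 0 s i = p i) -> (in_conv_hull s 0 <-> zconv p).
Proof. by subst k => h; apply: zconv_ext. Qed.

Definition hv n (k : nat) : 'cV[R]_n := \col_j (if (j < k)%N then 1 else 0).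
Definition ev n (k : nat) : 'cV[R]_n := \col_j (if (j == k :> nat) then 1 else 0).

Lemma psumE d n (M : 'M[R]_(d,n)) k : psum M k = M *m hv n k.
Proof.
apply/matrixP => r c; rewrite (ord1 c) /psum summxE !mxE big_mkcond /=.
by apply: eq_bigr => i _; rewrite !mxE; case: ifP; rewrite ?mulr1 ?mulr0.
Qed.

Lemma psum_starE d n (M : 'M[R]_(d,n)) : psum_star M = M *m (hv n n.-1 - ev n n.-1).
Proof.
rewrite mulmxBr -psumE /psum_star; congr (_ - _).
apply/matrixP => r c; rewrite (ord1 c) summxE !mxE big_mkcond /=.
by apply: eq_bigr => i _; rewrite !mxE; case: ifP; rewrite ?mulr1 ?mulr0.
Qed.

Definition qA n (i : 'I_(n.-1)) : 'cV[R]_n := hv n i.+1.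
Definition qB n (i : 'I_n) : 'cV[R]_n := hv n i.+1.
Definition qD n (i : 'I_(n.+1)) : 'cV[R]_n :=
  if (i < n)%N then hv n i.+1 else hv n n.-1 - ev n n.-1.

Lemma hullA d n (M : 'M[R]_(d,n)) :
  in_conv_hull (hull_points TypeA M) 0 <-> zconv (fun i => M *m qA i).
Proof.
apply: in_conv_hull_zconv; first by rewrite size_map size_iota.
move=> i; rewrite (nth_map 0%N) ?size_iota // nth_iota // psumE //.
Qed.

Lemma hullB d n (M : 'M[R]_(d,n)) :
  in_conv_hull (hull_points TypeB M) 0 <-> zconv (fun i => M *m qB i).
Proof.
apply: in_conv_hull_zconv; first by rewrite size_map size_iota.
move=> i; rewrite (nth_map 0%N) ?size_iota // nth_iota // psumE //.
Qed.

Lemma hullD d n (M : 'M[R]_(d,n)) :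
  in_conv_hull (hull_points TypeD M) 0 <-> zconv (fun i => M *m qD i).
Proof.
apply: in_conv_hull_zconv; first by rewrite size_rcons size_map size_iota.
move=> i; rewrite /= nth_rcons size_map size_iota /qD.
case: ifP => hi.
  by rewrite (nth_map 0%N) ?size_iota // nth_iota // psumE.
have := ltn_ord i; rewrite ltnS leq_eqVlt hi orbF => /eqP ->; rewrite eqxx.
by rewrite psum_starE.
Qed.

End P1.

Section P3.
Variable R : realType.

Lemma cone_zconv d n (W : set 'cV[R]_n) k (r : 'I_k -> 'cV[R]_n) (u : 'rV[R]_n) :
  (forall c : 'I_k -> R, (forall i, 0 <= c i) -> W (\sum_i c i *: r i)) ->
  (forall i, (u *m r i) ord0 ord0 = 1) ->
  (forall x, W x -> exists c : 'I_k -> R, (forall i, 0 <= c i) /\ x = \sum_i c i *: r i) ->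
  forall N : 'M[R]_(d,n), (exists x, x != 0 /\ N *m x = 0 /\ W x) <-> zconv (fun i => N *m r i).
Proof.
move=> hW hu hdec N; split.
  move=> [x [x0 [Nx Wx]]]; have [c [c0 xc]] := hdec x Wx.
  pose s := \sum_i c i.
  have s0 : 0 < s.
    rewrite lt_def sumr_ge0 // andbT; apply: contra x0 => /eqP /psumr_eq0P h.
    by rewrite xc big1 // => i _; rewrite h // scale0r.
  exists (fun i => c i / s); split; first by move=> i; rewrite divr_ge0 // ltW.
  split; first by rewrite -mulr_suml divff // gt_eqF.
  have : N *m x = \sum_i c i *: (N *m r i).
    by rewrite xc mulmx_sumr; apply: eq_bigr => i _; rewrite scalemxAr.
  rewrite Nx => h0.
  transitivity (s^-1 *: \sum_i c i *: (N *m r i)); last by rewrite -h0 scaler0.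
  by rewrite scaler_sumr; apply: eq_bigr => i _; rewrite scalerA mulrC.
move=> [l [l0 [l1 ls]]]; exists (\sum_i l i *: r i); split; last split.
- apply/eqP => h0; have := congr1 (fun v => (u *m v) ord0 ord0) h0.
  rewrite /= mulmx0 mulmx_sumr summxE [RHS]mxE.
  under eq_bigr do rewrite -scalemxAr mxE hu mulr1.
  by rewrite l1 => /eqP; rewrite oner_eq0.
- by rewrite mulmx_sumr -[RHS]ls; apply: eq_bigr => i _; rewrite scalemxAr.
- exact: hW.
Qed.

End P3.

Section P2.
Variable R : realType.
Variable n : nat.
Implicit Types x y : 'cV[R]_n.

Lemma entry_lip x y (i : 'I_n) : `|x i ord0 - y i ord0| <= `|x - y|.
Proof. by have := mx_entry_le (x - y) i ord0; rewrite !mxE. Qed.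

Lemma entry_lip' x y (i : 'I_n) : x i ord0 - y i ord0 <= `|x - y|.
Proof. exact: le_trans (ler_norm _) (entry_lip x y i). Qed.

Lemma sum_lip x y : \sum_i x i ord0 - \sum_i y i ord0 <= n%:R * `|x - y|.
Proof.
rewrite -sumrB; apply: le_trans (ler_norm _) _; rewrite (le_trans (ler_norm_sum _ _ _)) //.
rewrite -[n in n%:R]card_ord mulr_natl -sumr_const; apply: ler_sum => i _.
exact: entry_lip.
Qed.

Lemma dir_closure (C W : set 'cV[R]_n) :
  (forall x, W x -> exists v, forall t, 0 < t -> C (x + t *: v)) ->
  forall x, W x -> closure C x.
Proof.
move=> h x Wx B /nbhs_ballP [e e0 he]; have [v hv] := h x Wx.
have t0 : 0 < e / (`|v| + 1) by rewrite divr_gt0 // ltr_wpDl.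
exists (x + (e / (`|v| + 1)) *: v); split; first exact: hv.
apply: he; rewrite -ball_normE /= opprD addrA subrr sub0r normrN normrZ.
rewrite gtr0_norm // mulrAC ltr_pdivrMr ?ltr_wpDl //.
by rewrite ltr_pM2l // ltrDl.
Qed.

Definition WA : set 'cV[R]_n := [set x | (forall i j : 'I_n, (i < j)%N -> x i ord0 <= x j ord0)
   /\ \sum_i x i ord0 = 0].
Definition WB : set 'cV[R]_n := [set x | (forall i : 'I_n, (nat_of_ord i == 0)%N -> 0 <= x i ord0)
   /\ (forall i j : 'I_n, (i < j)%N -> x i ord0 <= x j ord0)].
Definition WD : set 'cV[R]_n := [set x | forall i j : 'I_n, (i < j)%N ->
   (if (nat_of_ord i == 0)%N then `|x i ord0| else x i ord0) <= x j ord0].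

Lemma le_pair_closure (C : set 'cV[R]_n) (i j : 'I_n) :
  (forall y, C y -> y i ord0 <= y j ord0) -> forall x, closure C x -> x i ord0 <= x j ord0.
Proof.
move=> h x cx; rewrite -subr_ge0.
apply: (@closure_ge0 _ _ _ C (fun y => y j ord0 - y i ord0) 2) => //.
  move=> u w; have h1 := entry_lip' u w j; have h2 := entry_lip' w u i.
  rewrite distrC in h2; lra.
by move=> y /h; rewrite subr_ge0.
Qed.

Lemma closureA : (0 < n)%N -> closure (@coneC R TypeA n) = WA.
Proof.
move=> n0; apply/seteqP; split.
  move=> x cx; split.
    move=> i j ij; apply: le_pair_closure cx => y [h _]; exact/ltW/h.
  apply/eqP; rewrite eq_le; apply/andP; split.
    rewrite -subr_ge0 sub0r.
    apply: (@closure_ge0 _ _ _ _ (fun y => - \sum_i y i ord0) n%:R) cx => //.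
      by move=> u w; have := sum_lip w u; rewrite distrC; lra.
    by move=> y [_ ->]; rewrite oppr0.
  apply: (@closure_ge0 _ _ _ _ (fun y => \sum_i y i ord0) n%:R) cx => //.
    by move=> u w; have := sum_lip u w.
  by move=> y [_ ->].
apply: dir_closure => x [hx sx].
pose c := (\sum_(j < n) (j : nat)%:R) / n%:R : R.
exists (\col_j ((j:nat)%:R - c)) => t t0; split.
  move=> i j ij; rewrite !mxE; have := hx i j ij.
  have : t * (i%:R - c) < t * (j%:R - c) by rewrite ltr_pM2l // ltrD2r ltr_nat.
  lra.
under eq_bigr do rewrite !mxE.
rewrite big_split /= sx add0r -mulr_sumr sumrB sumr_const card_ord.
by rewrite -mulr_natr /c divfK ?pnatr_eq0 -?lt0n // subrr mulr0.
Qed.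

Lemma closureB : closure (@coneC R TypeB n) = WB.
Proof.
apply/seteqP; split.
  move=> x cx; split.
    move=> i i0; apply: (@closure_ge0 _ _ _ _ (fun y => y i ord0) 1) cx => //.
      by move=> u w; rewrite mul1r; exact: entry_lip'.
    by move=> y [h _]; exact/ltW/h.
  move=> i j ij; apply: le_pair_closure cx => y [_ h]; exact/ltW/h.
apply: dir_closure => x [h0 hx].
exists (\col_j (j.+1)%:R) => t t0; split.
  move=> i i0; rewrite !mxE; have := h0 i i0.
  have : 0 < t * (i.+1)%:R by rewrite mulr_gt0.
  lra.
move=> i j ij; rewrite !mxE; have := hx i j ij.
have : t * (i.+1)%:R < t * (j.+1)%:R by rewrite ltr_pM2l // ltr_nat.
lra.
Qed.

Lemma absshift (a t : R) : 0 < t -> `|a + t * (if 0 <= a then 1 else -1)| = `|a| + t.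
Proof.
move=> t0; case: ifP => ha.
  by rewrite mulr1 !ger0_norm //; lra.
move/negbT: ha; rewrite -ltNge => ha.
by rewrite mulrN1 !ltr0_norm //; lra.
Qed.

Lemma closureD : closure (@coneC R TypeD n) = WD.
Proof.
apply/seteqP; split.
  move=> x cx i j ij; case: ifP => i0.
    rewrite -subr_ge0.
    apply: (@closure_ge0 _ _ _ _ (fun y => y j ord0 - `|y i ord0|) 2) cx => //.
      move=> u w; have h1 := entry_lip' u w j.
      have h2 := lerB_dist (w i ord0) (u i ord0).
      have h3 := entry_lip u w i; rewrite distrC in h2; lra.
    by move=> y [_ h]; have := h i j ij; rewrite i0 subr_ge0 => /ltW.
  by apply: le_pair_closure cx => y [_ h]; have := h i j ij; rewrite i0 => /ltW.
apply: dir_closure => x hx.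
exists (\col_j (if (nat_of_ord j == 0)%N then (if 0 <= x j ord0 then 1 else -1) else (j.+1)%:R))
  => t t0; split.
  move=> i i0; rewrite !mxE i0 absshift //.
  by have := normr_ge0 (x i ord0); lra.
move=> i j ij; rewrite !mxE; have := hx i j ij.
have jn0 : (nat_of_ord j == 0)%N = false by apply/negbTE; rewrite -lt0n (leq_ltn_trans _ ij).
rewrite jn0; case: ifP => i0.
  rewrite absshift //.
  have : t * 1 < t * (j.+1)%:R by rewrite ltr_pM2l // ltr1n ltnS lt0n jn0.
  lra.
have : t * (i.+1)%:R < t * (j.+1)%:R by rewrite ltr_pM2l // ltr_nat.
lra.
Qed.

End P2.

Section Rays.
Variable R : realType.
Variable n : nat.
Implicit Types x y : 'cV[R]_n.

Definition rv x : 'cV[R]_n := \col_j x (rev_ord j) ord0.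
Definition tl (t : nat) : 'cV[R]_n := \col_j (if (t <= j)%N then 1 else 0).
Definition onev : 'cV[R]_n := \col_j 1.
Definition xx x (t : nat) : R := \sum_(j < n | (j : nat) == t) x j ord0.

Lemma xxE x (j : 'I_n) : xx x j = x j ord0.
Proof.
rewrite /xx (eq_bigl (pred1 j)); first by rewrite big_pred1_eq.
by move=> k /=.
Qed.

Lemma rv_hv k : (k <= n)%N -> rv (@hv R n k) = tl (n - k).
Proof.
move=> kn; apply/matrixP => j c; rewrite !mxE /=.
have -> : (n - j.+1 < k)%N = (n - k <= j)%N by apply/idP/idP; have := ltn_ord j; lia.
by [].
Qed.

Lemma rv_ev : (0 < n)%N -> rv (@ev R n n.-1) = @ev R n 0.
Proof.
move=> n0; apply/matrixP => j c; rewrite !mxE /=.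
have -> : ((n - j.+1)%N == n.-1) = (nat_of_ord j == 0)%N by apply/idP/idP; have := ltn_ord j; lia.
by [].
Qed.

Lemma tel_tails (u : nat -> R) (j : 'I_n) :
  \sum_(i < n) (u (n - i)%N - u (n - i.+1)%N) * (if (n - i.+1 <= j)%N then 1 else 0) = u j.+1 - u 0.
Proof.
rewrite (reindex_inj rev_ord_inj) /=.
rewrite (eq_bigr (fun i : 'I_n => if (i < j.+1)%N then u i.+1 - u i else 0)); last first.
  move=> i _; have hi := ltn_ord i.
  have -> : (n - (n - i.+1) = i.+1)%N by lia.
  have -> : (n - (n - i.+1).+1 = i)%N by lia.
  have -> : (i <= j)%N = (i < j.+1)%N by [].
  by case: ifP; rewrite ?mulr1 ?mulr0.
rewrite -big_mkcond /= -(big_ord_widen _ (fun i => u i.+1 - u i)) //.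
by rewrite -(big_mkord xpredT (fun i => u i.+1 - u i)) telescope_sumr.
Qed.

Lemma count_tl (t : nat) : (t <= n)%N -> \sum_(j < n) (if (t <= j)%N then (1:R) else 0) = (n - t)%:R.
Proof.
move=> tn; rewrite -(big_mkord xpredT (fun j => if (t <= j)%N then (1:R) else 0)).
rewrite (big_cat_nat _ tn) //= big_nat_cond big1; last first.
  by move=> i /andP[/andP[_ it]]; rewrite leqNgt it.
rewrite add0r big_nat_cond (eq_bigr (fun _ => 1)); last first.
  by move=> i /andP[/andP[-> _]].
rewrite -big_nat_cond big_const_nat iter_addr addr0.
by [].
Qed.

Lemma sum_pick (k : 'I_n) (f : 'I_n -> R) :
  \sum_j ((nat_of_ord j == k)%:R * f j) = f k.
Proof.
rewrite (bigD1 k) //= eqxx mul1r big1 ?addr0 // => j jk.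
by rewrite (inj_eq val_inj) (negbTE jk) mul0r.
Qed.

End Rays.

Section ConeB.
Variable R : realType.
Variable n : nat.
Implicit Types x y : 'cV[R]_n.

Lemma entry_sum k (c : 'I_k -> R) (r : 'I_k -> 'cV[R]_n) j :
  (\sum_i c i *: r i) j ord0 = \sum_i c i * r i j ord0.
Proof. by rewrite summxE; apply: eq_bigr => i _; rewrite mxE. Qed.

Lemma tl_entry t j : (@tl R n t) j ord0 = if (t <= j)%N then 1 else 0.
Proof. by rewrite mxE. Qed.

Lemma tl_ge0 t j : 0 <= (@tl R n t) j ord0.
Proof. by rewrite tl_entry; case: ifP. Qed.

Lemma tl_mono t (i j : 'I_n) : (i <= j)%N -> (@tl R n t) i ord0 <= (@tl R n t) j ord0.
Proof.
move=> ij; rewrite !tl_entry; case: ifP => h1; case: ifP => h2 //.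
by move: h2; rewrite (leq_trans h1 ij).
Qed.

Lemma xx_mono x s t : (s <= t)%N -> (t < n)%N ->
  (forall i j : 'I_n, (i < j)%N -> x i ord0 <= x j ord0) -> xx x s <= xx x t.
Proof.
move=> st tn h; have sn : (s < n)%N by apply: leq_ltn_trans st tn.
rewrite -[s]/(nat_of_ord (Ordinal sn)) -[t]/(nat_of_ord (Ordinal tn)) !xxE.
case: (ltngtP s t) => [lt||eq].
- exact: h.
- by rewrite ltnNge st.
- by have -> : Ordinal sn = Ordinal tn by apply: val_inj.
Qed.

Definition uB x (t : nat) : R := if t is t'.+1 then xx x t' else 0.

Lemma coneB d (N : 'M[R]_(d,n)) :
  (exists x, x != 0 /\ N *m x = 0 /\ WB x) <-> zconv (fun i : 'I_n => N *m rv (qB R i)).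
Proof.
have rE : forall i : 'I_n, rv (qB R i) = tl R n (n - i.+1) by move=> i; rewrite /qB rv_hv.
apply: (@cone_zconv _ _ _ _ _ _ (\row_j (nat_of_ord j == n.-1)%:R)).
- move=> c c0; split.
    move=> i _; rewrite entry_sum; apply: sumr_ge0 => k _.
    by rewrite rE mulr_ge0 // tl_ge0.
  move=> i j ij; rewrite !entry_sum; apply: ler_sum => k _.
  by rewrite rE ler_wpM2l // tl_mono // ltnW.
- move=> i; have n0 : (0 < n)%N by apply: leq_ltn_trans (ltn_ord i).
  have nl : (n.-1 < n)%N by rewrite ltn_predL.
  rewrite mxE (eq_bigr (fun j => (nat_of_ord j == Ordinal nl)%:R * (rv (qB R i)) j ord0)).
    by rewrite sum_pick rE tl_entry /=; case: ifP => //; have := ltn_ord i; lia.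
  by move=> j _; rewrite mxE.
- move=> x [h0 hx]; exists (fun i : 'I_n => uB x (n - i)%N - uB x (n - i.+1)%N); split.
    move=> i; have hi := ltn_ord i.
    have -> : (n - i = (n - i.+1).+1)%N by lia.
    rewrite subr_ge0 /=; case E: (n - i.+1)%N => [|t] /=.
      have n0 : (0 < n)%N by lia.
      by rewrite -[0%N]/(nat_of_ord (Ordinal n0)) xxE h0.
    by apply: xx_mono => //; lia.
  apply/matrixP => j z; rewrite (ord1 z) entry_sum.
  under eq_bigr do rewrite rE tl_entry.
  by rewrite tel_tails /= subr0 xxE.
Qed.

End ConeB.

Section ConeD.
Variable R : realType.
Variable n : nat.
Implicit Types x y : 'cV[R]_n.

Lemma rvB x y : rv (x - y) = rv x - rv y.
Proof. by apply/matrixP => j c; rewrite !mxE. Qed.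

Lemma WD_abs x : WD x -> forall t, (0 < t < n)%N -> `|xx x 0| <= xx x t.
Proof.
move=> h t /andP[t0 tn]; have n0 : (0 < n)%N by apply: leq_trans tn.
rewrite -[0%N]/(nat_of_ord (Ordinal n0)) -[t]/(nat_of_ord (Ordinal tn)) !xxE.
by have := h (Ordinal n0) (Ordinal tn) t0.
Qed.

Lemma WD_mono x : WD x -> forall s t, (0 < s)%N -> (s <= t)%N -> (t < n)%N -> xx x s <= xx x t.
Proof.
move=> h s t s0 st tn; have sn : (s < n)%N by apply: leq_ltn_trans st tn.
rewrite -[s]/(nat_of_ord (Ordinal sn)) -[t]/(nat_of_ord (Ordinal tn)) !xxE.
case: (ltngtP s t) => [lt||eq].
- have e : (s == 0)%N = false by lia.
  by have := h (Ordinal sn) (Ordinal tn) lt; rewrite /= e.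
- by rewrite ltnNge st.
- by have -> : Ordinal sn = Ordinal tn by apply: val_inj.
Qed.

Definition aD x : R := (xx x 1 + xx x 0) / 2.
Definition bD x : R := (xx x 1 - xx x 0) / 2.
Definition uD x (t : nat) : R :=
  match t with 0 => 0 | 1 => aD x | t'.+1 => xx x t' - bD x end.

Lemma rayDE (i : 'I_n.+1) : (1 < n)%N ->
  rv (qD R i) = if (i < n)%N then tl R n (n - i.+1) else tl R n 1 - ev R n 0.
Proof.
move=> n1; rewrite /qD; case: ifP => hi.
  by rewrite rv_hv.
rewrite rvB rv_hv ?leq_pred // rv_ev; last by apply: ltnW.
by have -> : (n - n.-1 = 1)%N by lia.
Qed.

Lemma coneD d (N : 'M[R]_(d,n)) : (1 < n)%N ->
  (exists x, x != 0 /\ N *m x = 0 /\ WD x) <-> zconv (fun i : 'I_n.+1 => N *m rv (qD R i)).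
Proof.
move=> n1.
have evE : forall j : 'I_n, (ev R n 0) j ord0 = if (nat_of_ord j == 0)%N then 1 else 0.
  by move=> j; rewrite mxE.
have rE : forall (i : 'I_n.+1) (j : 'I_n), (rv (qD R i)) j ord0 =
   if (i < n)%N then (if (n - i.+1 <= j)%N then 1 else 0)
   else ((if (1 <= j)%N then 1 else 0) - (if (nat_of_ord j == 0)%N then 1 else 0)).
  by move=> i j; rewrite rayDE //; case: ifP => _; rewrite ?mxE.
have nl : (n.-1 < n)%N by rewrite ltn_predL; lia.
apply: (@cone_zconv _ _ _ _ _ _ (\row_j (nat_of_ord j == n.-1)%:R)).
- move=> c c0 i j ij; rewrite !entry_sum; case: ifP => i0.
    apply: le_trans (ler_norm_sum _ _ _) _; apply: ler_sum => k _.
    rewrite normrM ger0_norm // ler_wpM2l // !rE; case: ifP => _.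
      case: ifP => h1; last by rewrite normr0; case: ifP.
      by rewrite (leq_trans h1 (ltnW ij)) normr1.
    have e1 : (0 < i)%N = false by rewrite lt0n i0.
    have e2 : (0 < j)%N = true by apply: leq_ltn_trans ij.
    have e3 : (nat_of_ord j == 0)%N = false by apply/negbTE; rewrite -lt0n e2.
    by rewrite i0 e1 e2 e3 sub0r normrN normr1 subr0.
  apply: ler_sum => k _; rewrite ler_wpM2l // !rE; case: ifP => _.
    case: ifP => h1; last by case: ifP.
    by rewrite (leq_trans h1 (ltnW ij)).
  have e1 : (0 < i)%N = true by rewrite lt0n i0.
  have e2 : (0 < j)%N = true by apply: leq_ltn_trans ij.
  have e3 : (nat_of_ord j == 0)%N = false by apply/negbTE; rewrite -lt0n e2.
  by rewrite i0 e1 e2 e3.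
- move=> i; rewrite mxE (eq_bigr (fun j => (nat_of_ord j == Ordinal nl)%:R * (rv (qD R i)) j ord0)).
    rewrite sum_pick rE /=; case: ifP => hi.
      have -> : (n - i.+1 <= n.-1)%N by rewrite -subn1; apply: leq_sub2l.
      by [].
    have e1 : (0 < n.-1)%N by rewrite -ltnS prednK // ltnW.
    have e2 : (n.-1 == 0)%N = false by apply/negbTE; rewrite -lt0n.
    by rewrite e1 e2 subr0.
  by move=> j _; rewrite mxE.
move=> x hx.
have h1 : `|xx x 0| <= xx x 1 by apply: WD_abs => //; rewrite /= n1.
have h2 : - xx x 0 <= `|xx x 0| by rewrite -normrN ler_norm.
have h3 : xx x 0 <= `|xx x 0| := ler_norm _.
have a0 : 0 <= aD x by rewrite /aD divr_ge0 //; lra.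
have b0 : 0 <= bD x by rewrite /bD divr_ge0 //; lra.
exists (fun i : 'I_n.+1 => if (i < n)%N then uD x (n - i)%N - uD x (n - i.+1)%N else bD x); split.
  move=> i; case: ifP => hi //.
  rewrite -(subnSK hi).
  case E: (n - i.+1)%N => [|[|t]] /=.
  + by rewrite subr0.
  + by rewrite /bD /aD; lra.
  + rewrite subr_ge0 lerD2r; apply: WD_mono => //.
    by move: E; clear; lia.
apply/matrixP => j z; rewrite (ord1 z) entry_sum big_ord_recr /=.
rewrite (eq_bigr (fun i : 'I_n => (uD x (n - i)%N - uD x (n - i.+1)%N) *
    (if (n - i.+1 <= j)%N then 1 else 0))); last first.
  by move=> i _; rewrite /= ltn_ord rE /= ltn_ord.
rewrite tel_tails ltnn rE /= ltnn.
case: j => [[|j] jn] /=.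
  rewrite -[x _ ord0]xxE /= /aD /bD; lra.
rewrite -[x _ ord0]xxE /= /aD /bD; lra.
Qed.

End ConeD.

Section ConeA.
Variable R : realType.
Variable n : nat.
Local Notation m := n.+1.

Definition alpha (i : 'I_n) : R := (i.+1)%:R / m%:R.
Definition rayA (i : 'I_n) : 'cV[R]_m := rv (@qA R m i) - alpha i *: onev R m.
Definition uA (x : 'cV[R]_m) (t : nat) : R := if t is t'.+1 then xx x t' - xx x 0 else 0.

Lemma rayAE (i : 'I_n) (j : 'I_m) :
  rayA i j ord0 = (if (m - i.+1 <= j)%N then 1 else 0) - alpha i.
Proof.
rewrite /rayA /qA rv_hv; last by apply: ltnW; rewrite ltnS.
by rewrite !mxE mulr1.
Qed.

Lemma rayA_sum (i : 'I_n) : \sum_j rayA i j ord0 = 0.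
Proof.
under eq_bigr do rewrite rayAE.
rewrite sumrB count_tl; last by rewrite leq_subr.
rewrite sumr_const card_ord /alpha -[_ *+ m]mulr_natr divfK ?pnatr_eq0 //.
by rewrite subKn ?subrr // ltnW // ltnS.
Qed.

Lemma coneA d (N : 'M[R]_(d,m)) :
  (exists x, x != 0 /\ N *m x = 0 /\ WA x) <-> zconv (fun i : 'I_n => N *m rayA i).
Proof.
have sumE : forall (c : 'I_n -> R), \sum_j (\sum_i c i *: rayA i) j ord0 = 0.
  move=> c; under eq_bigr do rewrite entry_sum.
  rewrite exchange_big /= big1 // => i _; by rewrite -mulr_sumr rayA_sum mulr0.
apply: (@cone_zconv _ _ _ _ _ _ (\row_j ((nat_of_ord j == n)%:R - (nat_of_ord j == 0)%:R))).
- move=> c c0; split; last exact: sumE.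
  move=> i j ij; rewrite !entry_sum; apply: ler_sum => k _.
  rewrite ler_wpM2l // !rayAE lerD2r.
  case: ifP => h1; last by case: ifP.
  by rewrite (leq_trans h1 (ltnW ij)).
- move=> i; rewrite mxE.
  under eq_bigr do rewrite mxE mulrBl.
  rewrite sumrB (sum_pick (ord_max : 'I_m)) (sum_pick (ord0 : 'I_m)) !rayAE /=.
  have e1 : (m - i.+1 <= n)%N by rewrite leq_subLR addSnnS leq_addl.
  have e2 : (m - i.+1 <= 0)%N = false by apply/negbTE; rewrite leqn0 subn_eq0 -ltnNge ltnS ltn_ord.
  by rewrite e1 e2 opprB addrA subrK subr0.
- move=> x [hx sx].
  exists (fun i : 'I_n => uA x (m - i)%N - uA x (m - i.+1)%N); split.
    move=> i; have hi : (i < m)%N by apply: ltnW; rewrite ltnS.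
    rewrite -(subnSK hi).
    case E: (m - i.+1)%N => [|t] /=.
      by move: E (ltn_ord i); clear; lia.
    rewrite subr_ge0 lerD2r; apply: xx_mono => //.
    by move: E (ltn_ord i); clear; lia.
  set y := \sum_i _ *: rayA i.
  pose K := \sum_(i : 'I_n) (uA x (m - i)%N - uA x (m - i.+1)%N) * alpha i.
  have yE : forall j : 'I_m, y j ord0 = x j ord0 - x ord0 ord0 - K.
    move=> j; rewrite /y entry_sum.
    under eq_bigr do rewrite rayAE mulrBr.
    rewrite sumrB; congr (_ - _).
    have := tel_tails (uA x) j; rewrite big_ord_recr /= subnn subSnn /= subrr subr0.
    rewrite mul0r addr0 subr0 => ->.
    by rewrite xxE -[xx x 0]/(xx x (@ord0 n)) xxE.
  have K0 : x ord0 ord0 + K = 0.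
    have := sumE (fun i => uA x (m - i)%N - uA x (m - i.+1)%N); rewrite -/y.
    under eq_bigr do rewrite yE.
    rewrite sumrB sumrB sx !sumr_const card_ord sub0r.
    move/eqP; rewrite -opprD oppr_eq0 -mulrnDl -mulr_natr mulf_eq0 pnatr_eq0 orbF.
    by move/eqP.
  apply/matrixP => j z; rewrite (ord1 z) yE; lra.
Qed.

End ConeA.

Section Assembly.
Variable R : realType.

Definition rp n : 'S_n := perm (@rev_ord_inj n).

Lemma g_act_rv n (v : 'cV[R]_n) : g_act (rp n) (fun _ => false) (rv v) = v.
Proof.
apply/matrixP => j c; rewrite (ord1 c) !mxE mul1r.
have -> : ((rp n)^-1 j = rev_ord j)%g.
  by apply: (@perm_inj _ (rp n)); rewrite permKV permE rev_ordK.
by rewrite rev_ordK.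
Qed.

Lemma ae_eq_set dm (Omega : measurableType dm) (P : probability Omega R) (A B G : set Omega) :
  measurable A -> measurable B -> {ae P, forall w, G w} ->
  (forall w, G w -> (A w <-> B w)) -> P A = P B.
Proof.
move=> mA mB [N0 [mN0 PN0 sub]] hAB.
have h : forall C, measurable C -> P C = P (C `\` N0).
  move=> C mC; rewrite (measureDI P mC mN0).
  have PC0 : P (C `&` N0) = 0%E.
    apply/eqP; rewrite eq_le measure_ge0 andbT -PN0.
    by apply: le_measure; rewrite ?inE //; (try exact: measurableI); exact: subIsetr.
  by rewrite -[RHS]adde0; congr (_ + _)%E.
rewrite (h _ mA) (h _ mB); congr (P _); apply/seteqP; split => w [Aw nw];
  (split => //; apply/(hAB w) => //; apply: contrapT => Gw; apply: nw; exact: sub).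
Qed.

End Assembly.

Section Main.
Variable R : realType.

Lemma EclB d n (N : 'M[R]_(d,n)) :
  (exists y, y != 0 /\ N *m y = 0 /\ closure (@coneC R TypeB n) y) <->
  zconv (fun i => N *m rv (qB R i)).
Proof. by rewrite closureB; exact: coneB. Qed.

Lemma EclD d n (N : 'M[R]_(d,n)) : (1 < n)%N ->
  (exists y, y != 0 /\ N *m y = 0 /\ closure (@coneC R TypeD n) y) <->
  zconv (fun i => N *m rv (qD R i)).
Proof. by move=> n1; rewrite closureD; exact: coneD. Qed.

Lemma EclA d n (N : 'M[R]_(d,n.+1)) :
  (exists y, y != 0 /\ N *m y = 0 /\ closure (@coneC R TypeA n.+1) y) <->
  zconv (fun i => N *m @rayA R n i).
Proof. by rewrite closureA //; exact: coneA. Qed.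

Lemma psc_rv d n (M : 'M[R]_(d,n)) v :
  perm_sign_cols (rp n) (fun _ => false) M *m rv v = M *m v.
Proof. by rewrite -g_actP g_act_rv. Qed.

Lemma setP_iff {T} (A B : T -> Prop) : (forall x, A x <-> B x) -> [set x | A x] = [set x | B x].
Proof. by move=> h; apply/seteqP; split => x /h. Qed.

End Main.

Lemma main_step (R : realType) dm (Omega : measurableType dm) (P : probability Omega R) d n
  (X : Omega -> 'M[R]_(d,n)) (Ecl : 'M[R]_(d,n) -> Prop) (L : set Omega) s eps :
  mx_measurable [set N | Ecl N] ->
  eq_in_law P X (perm_sign_cols s eps \o X) ->
  P L = P (X @^-1` [set N | Ecl N]) ->
  P L = P ((perm_sign_cols s eps \o X) @^-1` [set N | Ecl N]).
Proof. by move=> mB heq ->; exact: heq. Qed.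

Theorem lemma6p1 (R : realType) (dm : measure_display) (Omega : measurableType dm)
  (P : probability Omega R) (t : rtype) (d n : nat)
  (X : Omega -> 'M[R]_(d, n)) :
  random_mx X ->
  type_assumptions P t X ->
  forall (s : 'S_n) (eps : 'I_n -> bool), signs_ok t eps ->
  P [set w | in_conv_hull (hull_points t (X w)) 0]
  = P [set w | exists x : 'cV[R]_n,
         x != 0 /\ X w *m x = 0 /\ (g_act s eps @` closure (@coneC R t n)) x].
Proof.
move=> hX hT s eps hse.
rewrite (_ : [set w | exists x : 'cV[R]_n, _] = (perm_sign_cols s eps \o X) @^-1`
   [set N | exists y, y != 0 /\ N *m y = 0 /\ closure (@coneC R t n) y]); last first.
  by apply/setP_iff => w; apply: Ecl_g.
case: t hT hse => [[dn [heq hae]] hse | [dn heq] _ | [dn heq] hse].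
-
  have -> : eps = (fun _ => false).
    by apply/funext => k; move/forallP: hse => /(_ k); case: (eps k).
  case: n X hX s heq hae {hse eps} dn => [|n] X hX s heq hae dn; first by [].
  pose B := [set N : 'M[R]_(d,n.+1) | exists y, y != 0 /\ N *m y = 0 /\
     closure (@coneC R TypeA n.+1) y].
  have BE : B = [set N | zconv (fun i => N *m @rayA R n i)] by apply: setP_iff => N; apply: EclA.
  have mB : mx_measurable B by rewrite BE; exact: zconv_meas.
  apply: (main_step mB (heq s)).

  transitivity (P ((perm_sign_cols (rp n.+1) (fun _ => false) \o X) @^-1` B)); last first.
    by symmetry; exact: (heq (rp n.+1) B mB).
  apply: (ae_eq_set (G := fun w => psum (X w) n.+1 = 0) _ _ hae).
  + rewrite (_ : [set w | _] = X @^-1` [set M | zconv (fun i => M *m qA R i)]).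
      exact: (hX _ (zconv_meas _)).
    by apply: setP_iff => w; apply: hullA.
  + rewrite (_ : _ @^-1` B = X @^-1` [set M | zconv (fun i => M *m
        g_act (rp n.+1) (fun _ => false) (@rayA R n i))]).
      exact: (hX _ (zconv_meas _)).
    rewrite BE; apply: setP_iff => w /=; apply: zconv_ext => i; by rewrite g_actP.
  + move=> w hw /=; rewrite hullA BE /=; apply: zconv_ext => i.
    rewrite -g_actP /rayA.
    have glin : forall (x y : 'cV[R]_n.+1) a, g_act (rp n.+1) (fun _ => false) (x - a *: y) =
        g_act (rp n.+1) (fun _ => false) x - a *: g_act (rp n.+1) (fun _ => false) y.
      by move=> x y a; apply/matrixP => j c; rewrite !mxE; ring.
    have gone : g_act (rp n.+1) (fun _ => false) (onev R n.+1) = hv R n.+1 n.+1.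
      by apply/matrixP => j c; rewrite !mxE ltn_ord mulr1.
    by rewrite glin g_act_rv gone mulmxBr -scalemxAr -[X w *m hv R n.+1 n.+1]psumE hw scaler0 subr0.
-
  pose B := [set N : 'M[R]_(d,n) | exists y, y != 0 /\ N *m y = 0 /\
     closure (@coneC R TypeB n) y].
  have BE : B = [set N | zconv (fun i => N *m rv (qB R i))] by apply: setP_iff => N; apply: EclB.
  have mB : mx_measurable B by rewrite BE; exact: zconv_meas.
  apply: (main_step mB (heq s eps)).
  rewrite (_ : [set w | _] = (perm_sign_cols (rp n) (fun _ => false) \o X) @^-1` B).
    by symmetry; exact: (heq (rp n) (fun _ => false) B mB).
  rewrite BE; apply: setP_iff => w /=; rewrite hullB; apply: zconv_ext => i.
  by rewrite psc_rv.
-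
  have n1 : (1 < n)%N by apply: leq_trans dn; exact: leq_maxl.
  pose B := [set N : 'M[R]_(d,n) | exists y, y != 0 /\ N *m y = 0 /\
     closure (@coneC R TypeD n) y].
  have BE : B = [set N | zconv (fun i => N *m rv (qD R i))] by apply: setP_iff => N; apply: EclD.
  have mB : mx_measurable B by rewrite BE; exact: zconv_meas.
  apply: (main_step mB (heq s eps hse)).
  rewrite (_ : [set w | _] = (perm_sign_cols (rp n) (fun _ => false) \o X) @^-1` B).
    have hs0 : signs_ok TypeD (fun _ : 'I_n => false) by rewrite /signs_ok big1.
    by symmetry; exact: (heq (rp n) _ hs0 B mB).
  rewrite BE; apply: setP_iff => w /=; rewrite hullD; apply: zconv_ext => i.
  by rewrite psc_rv.
Qed.
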